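(* On a three-letter alphabet: (1) there exists a $1$-regular word of length $n\ge 1$ if and only if $n=3k$ for some integer $k\ge 2$; (2) there exists a $2$-regular word of length $n\ge 1$ if and only if $n=9k$ for some integer $k\ge 2$.
   Context: For a word $u=u_1\cdots u_m$ over an alphabet $\mathcal A$ with $b$ letters and an integer $r\ge -1$, $u$ is $r$-regular if for every $k=0,1,\dots,r$ the sum $\sum_{1\le t\le m,\ u_t=c} t^k$ is the same for all letters $c\in\mathcal A$ (a letter not occurring contributes $0$). Here $b=3$. *)

(* Defs.v *)
From mathcomp Require Import all_boot.
Set Implicit Arguments. Unset Strict Implicit. Unset Printing Implicit Defensive.

(* Words over an alphabet with b letters: sequences over 'I_b.
   Positions are 1-indexed: the letter at position t (1 <= t <= m) is
   nth _ u (t-1). *)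

Definition power_sum (b : nat) (u : seq 'I_b) (c : 'I_b) (k : nat) : nat :=
  \sum_(i < size u | nth c u i == c) (i.+1) ^ k.

Definition regular (b : nat) (r : nat) (u : seq 'I_b) : Prop :=
  forall k : nat, k <= r ->
    forall c d : 'I_b, power_sum u c k = power_sum u d k.

(* Main.v *)
Require Import Defs.
From mathcomp Require Import all_boot.
From mathcomp Require Import zify.
Set Implicit Arguments. Unset Strict Implicit. Unset Printing Implicit Defensive.

Fixpoint psf (s : seq 'I_3) (off : nat) (c : 'I_3) (k : nat) : nat :=
  match s with
  | [::] => 0
  | x :: s' => (if x == c then off.+1 ^ k else 0) + psf s' off.+1 c k
  end.

Lemma psf_big (s : seq 'I_3) c k off :
  \sum_(i < size s | nth c s i == c) (off + i).+1 ^ k = psf s off c k.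
Proof.
elim: s off => [|x s IH] off /=; first by rewrite big_ord0.
rewrite big_mkcond big_ord_recl /= -big_mkcond /= addn0 -IH.
congr (_ + _); apply: eq_bigr => i _.
by rewrite /bump /= add1n addSnnS.
Qed.

Lemma power_sum_psf u c k : power_sum u c k = psf u 0 c k.
Proof. by rewrite -psf_big. Qed.

Lemma psf_cat u v off c k :
  psf (u ++ v) off c k = psf u off c k + psf v (off + size u) c k.
Proof.
elim: u off => [|x u IH] off /=; first by rewrite addn0.
by rewrite IH addSnnS addnA.
Qed.

Lemma psf_sh0 v L off c : psf v (L + off) c 0 = psf v off c 0.
Proof.
elim: v off => [|x v IH] off //=.
by rewrite -addnS IH.
Qed.

Lemma psf_sh1 v L off c :
  psf v (L + off) c 1 = L * psf v off c 0 + psf v off c 1.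
Proof.
elim: v off => [|x v IH] off /=; first by rewrite muln0.
rewrite -addnS IH; case: (x == c); rewrite ?expn1 ?expn0; lia.
Qed.

Lemma psf_sh2 v L off c :
  psf v (L + off) c 2 =
  L ^ 2 * psf v off c 0 + 2 * L * psf v off c 1 + psf v off c 2.
Proof.
elim: v off => [|x v IH] off /=; first by rewrite !muln0.
rewrite -addnS IH; case: (x == c); rewrite ?expn0 /=; nia.
Qed.

Definition l0 : 'I_3 := @Ordinal 3 0 isT.
Definition l1 : 'I_3 := @Ordinal 3 1 isT.
Definition l2 : 'I_3 := @Ordinal 3 2 isT.

Lemma ord3 (c : 'I_3) : c = l0 \/ c = l1 \/ c = l2.
Proof.
case: c => [[|[|[|m]]] Hc].
- by left; apply: val_inj.
- by right; left; apply: val_inj.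
- by right; right; apply: val_inj.
- by [].
Qed.

Fixpoint tot n off k := if n is n'.+1 then off.+1 ^ k + tot n' off.+1 k else 0.

Lemma psf_sum s off k :
  psf s off l0 k + psf s off l1 k + psf s off l2 k = tot (size s) off k.
Proof.
elim: s off => [|x s IH] off //=.
rewrite -IH; case: (ord3 x) => [->|[->|->]] /=; lia.
Qed.

Lemma tot0 n off : tot n off 0 = n.
Proof. by elim: n off => [|n IH] off //=; rewrite IH. Qed.

Lemma tot1 n off : 2 * tot n off 1 = n * (2 * off + n + 1).
Proof. elim: n off => [|n IH] off //=; have := IH off.+1; rewrite expn1; nia. Qed.

Lemma tot2 n off :
  6 * tot n off 2 = n * (6 * off ^ 2 + 6 * off * (n + 1) + (n + 1) * (2 * n + 1)).
Proof. elim: n off => [|n IH] off //=; have := IH off.+1; nia. Qed.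

Lemma reg_iff r (u : seq 'I_3) :
  regular r u <-> (forall k, k <= r -> psf u 0 l0 k = psf u 0 l1 k /\ psf u 0 l1 k = psf u 0 l2 k).
Proof.
split.
- move=> H k Hk; rewrite -!power_sum_psf; split; exact: H.
- move=> H k Hk c d; rewrite !power_sum_psf.
  have [H1 H2] := H k Hk.
  by case: (ord3 c) => [->|[->|->]]; case: (ord3 d) => [->|[->|->]]; rewrite ?H1 ?H2.
Qed.

Definition regb r (u : seq 'I_3) :=
  all (fun k => (psf u 0 l0 k == psf u 0 l1 k) && (psf u 0 l1 k == psf u 0 l2 k))
      (iota 0 r.+1).

Lemma regbP r (u : seq 'I_3) : regb r u -> regular r u.
Proof.
move=> /allP H; apply/reg_iff => k Hk.
have /H /andP [/eqP -> /eqP ->] : k \in iota 0 r.+1 by rewrite mem_iota.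
by [].
Qed.

Lemma reg_b r (u : seq 'I_3) : regular r u -> regb r u.
Proof.
move/reg_iff => H; apply/allP => k; rewrite mem_iota add0n ltnS => Hk.
by have [-> ->] := H k Hk; rewrite !eqxx.
Qed.

Fixpoint words n : seq (seq 'I_3) :=
  if n is n'.+1 then
    flatten [seq [seq x :: w | w <- words n'] | x <- [:: l0; l1; l2]]
  else [:: [::]].

Lemma words_mem u : u \in words (size u).
Proof.
elim: u => [|x u IH] //=.
case: (ord3 x) => [->|[->|->]]; rewrite /= !mem_cat map_f ?orbT //.
Qed.

Lemma no3 (u : seq 'I_3) : size u = 3 -> ~ regular 1 u.
Proof.
move=> Hs /reg_b Hr.
have: all (fun u => ~~ regb 1 u) (words 3) by vm_compute.
have := words_mem u; rewrite Hs => Hm.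
move/allP/(_ u Hm).
by rewrite Hr.
Qed.

Lemma no9 (u : seq 'I_3) : size u = 9 -> ~ regular 2 u.
Proof.
move=> Hs /reg_b Hr.
have: all (fun u => ~~ regb 2 u) (words 9) by vm_compute.
have := words_mem u; rewrite Hs => Hm.
move/allP/(_ u Hm).
by rewrite Hr.
Qed.

Lemma reg_cat r (u v : seq 'I_3) : r <= 2 -> regular r u -> regular r v -> regular r (u ++ v).
Proof.
move=> Hr /reg_iff Hu /reg_iff Hv; apply/reg_iff => k Hk.
rewrite !psf_cat /= -[size u]addn0.
have [u1 u2] := Hu k Hk; have [v1 v2] := Hv k Hk.
case: k Hk u1 u2 v1 v2 => [|[|[|k]]] Hk u1 u2 v1 v2.
- by rewrite !psf_sh0 u1 u2 v1 v2.
- have [w1 w2] := Hv 0 isT.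
  by rewrite !psf_sh1 u1 u2 v1 v2 w1 w2.
- have [w1 w2] := Hv 0 isT.
  have [z1 z2] := Hv 1 (leq_trans (isT : 1 <= 2) Hk).
  by rewrite !psf_sh2 u1 u2 v1 v2 w1 w2 z1 z2.
- exfalso; lia.
Qed.

Lemma build r (w6 w9 : seq 'I_3) L :
  r <= 2 -> size w6 = 2 * L -> size w9 = 3 * L -> regular r w6 -> regular r w9 ->
  forall k, 2 <= k -> exists u : seq 'I_3, size u = k * L /\ regular r u.
Proof.
move=> Hr s6 s9 r6 r9 k; elim/ltn_ind: k => k IH Hk.
case: k IH Hk => [|[|[|[|k]]]] IH Hk //.
- by exists w6.
- by exists w9.
- have [u [su ru]] := IH k.+2 (leq_trans (ltnSn _) (leqnSn _)) isT.
  exists (u ++ w6); split; last exact: reg_cat.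
  rewrite size_cat su s6; lia.
Qed.

Definition w6 : seq 'I_3 := [:: l0; l1; l2; l2; l1; l0].
Definition w9 : seq 'I_3 := [:: l0; l1; l2; l2; l0; l1; l1; l2; l0].
Definition v18 : seq 'I_3 :=
  [:: l0; l1; l2; l0; l1; l2; l2; l2; l1; l1; l0; l0; l1; l0; l0; l2; l2; l1].
Definition v27 : seq 'I_3 :=
  [:: l0; l0; l1; l1; l2; l2; l2; l2; l0; l1; l1; l2; l0; l1; l1; l2; l1; l0; l0;
      l0; l0; l2; l0; l2; l1; l2; l1].

Theorem mainTheorem12 :
  (forall n : nat, 1 <= n ->
     ((exists u : seq 'I_3, size u = n /\ regular 1 u) <->
      (exists k : nat, 2 <= k /\ n = 3 * k)))
  /\
  (forall n : nat, 1 <= n ->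
     ((exists u : seq 'I_3, size u = n /\ regular 2 u) <->
      (exists k : nat, 2 <= k /\ n = 9 * k))).
Proof.
split=> n Hn; split.
- move=> [u [Hs Hr]].
  have /reg_iff H := Hr.
  have [a1 a2] := H 0 isT; have [b1 b2] := H 1 isT.
  have e0 := psf_sum u 0 0; have e1 := psf_sum u 0 1.
  rewrite tot0 in e0; have t1 := tot1 (size u) 0.
  exists (psf u 0 l0 0); split; last lia.
  case E: (psf u 0 l0 0) => [|[|p]]; try lia.
  exfalso; apply: (no3 (u := u)) => //; lia.
- move=> [k [Hk ->]].
  have [u [su ru]] := build (r := 1) (w6 := w6) (w9 := w9) (L := 3) isT erefl erefl
     (regbP (r := 1) (u := w6) (erefl true)) (regbP (r := 1) (u := w9) (erefl true)) Hk.
  by exists u; rewrite su mulnC.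
- move=> [u [Hs Hr]].
  have /reg_iff H := Hr.
  have [a1 a2] := H 0 isT; have [b1 b2] := H 1 isT; have [c1 c2] := H 2 isT.
  have e0 := psf_sum u 0 0; have e1 := psf_sum u 0 1; have e2 := psf_sum u 0 2.
  rewrite tot0 in e0; have t1 := tot1 (size u) 0; have t2 := tot2 (size u) 0.
  set p := psf u 0 l0 0 in a1 e0.
  have hp := divn_eq p 3; have hr := ltn_pmod p (isT : 0 < 3).
  set q := p %/ 3 in hp; set r := p %% 3 in hp hr.
  have r0 : r = 0.
    case: r hp hr => [|[|[|]]] hp hr //; exfalso; nia.
  exists q; split; last lia.
  case E: q => [|[|q']]; try lia.
  exfalso; apply: (no9 (u := u)) => //; lia.
- move=> [k [Hk ->]].
  have [u [su ru]] := build (r := 2) (w6 := v18) (w9 := v27) (L := 9) isT erefl erefl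
     (regbP (r := 2) (u := v18) (erefl true)) (regbP (r := 2) (u := v27) (erefl true)) Hk.
  by exists u; rewrite su mulnC.
Qed.
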